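(* Let $S$ be an idempotent semiring. The following are equivalent: (1) $\mathcal{D}^{\bullet}$ is the least distributive lattice congruence on $S$; (2) $S$ satisfies $x+xyx+x\approx x$ and $\mathcal{D}^{+}\subseteq\mathcal{D}^{\bullet}$; (3) $S$ satisfies the identity $x\approx xyx+x+xyx$.
   Context: An idempotent semiring is an algebra $(S,+,\cdot)$ with two binary operations such that $(S,+)$ and $(S,\cdot)$ are bands (associative, with $x+x=x$ and $xx=x$), and both distributive laws $x(y+z)=xy+xz$ and $(x+y)z=xz+yz$ hold; addition is not assumed commutative. A distributive lattice congruence on $S$ is a congruence $\rho$ such that $S/\rho$ satisfies $x+y\approx y+x$, $xy\approx yx$ and $x+xy\approx x$. Green's relations on the reducts: $a\,\mathcal{D}^{\bullet}\,b$ iff $aba=a$ and $bab=b$; $a\,\mathcal{D}^{+}\,b$ iff $a+b+a=a$ and $b+a+b=b$. *)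

(* Defs.v *)
Definition idempotent_semiring {S : Type} (add mul : S -> S -> S) : Prop :=
  (forall x y z, add x (add y z) = add (add x y) z) /\
  (forall x, add x x = x) /\
  (forall x y z, mul x (mul y z) = mul (mul x y) z) /\
  (forall x, mul x x = x) /\
  (forall x y z, mul x (add y z) = add (mul x y) (mul x z)) /\
  (forall x y z, mul (add x y) z = add (mul x z) (mul y z)).

Definition congruence {S : Type} (add mul : S -> S -> S) (rho : S -> S -> Prop) : Prop :=
  (forall x, rho x x) /\
  (forall x y, rho x y -> rho y x) /\
  (forall x y z, rho x y -> rho y z -> rho x z) /\
  (forall x y u v, rho x y -> rho u v -> rho (add x u) (add y v)) /\
  (forall x y u v, rho x y -> rho u v -> rho (mul x u) (mul y v)).

Definition dl_congruence {S : Type} (add mul : S -> S -> S) (rho : S -> S -> Prop) : Prop :=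
  congruence add mul rho /\
  (forall x y, rho (add x y) (add y x)) /\
  (forall x y, rho (mul x y) (mul y x)) /\
  (forall x y, rho (add x (mul x y)) x).

Definition least_dl_congruence {S : Type} (add mul : S -> S -> S) (rho : S -> S -> Prop) : Prop :=
  dl_congruence add mul rho /\
  (forall sigma, dl_congruence add mul sigma -> forall a b, rho a b -> sigma a b).

(* Green's D relation on the multiplicative band: a D b iff aba = a and bab = b. *)
Definition Dmul {S : Type} (mul : S -> S -> S) (a b : S) : Prop :=
  mul (mul a b) a = a /\ mul (mul b a) b = b.

(* Green's D relation on the additive band: a+b+a = a and b+a+b = b. *)
Definition Dadd {S : Type} (add : S -> S -> S) (a b : S) : Prop :=
  add (add a b) a = a /\ add (add b a) b = b.

(* Main.v *)
Require Import Defs.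
From Stdlib Require Import List.
Import ListNotations.
Section Band.
Variable (T : Type) (f : T -> T -> T).
Hypothesis fA : forall x y z, f x (f y z) = f (f x y) z.
Hypothesis fI : forall x, f x x = x.

Fixpoint ev (x : T) (l : list T) : T :=
  match l with nil => x | y :: l' => ev (f x y) l' end.

Definition E (d : T) (l : list T) : T :=
  match l with nil => d | x :: l' => ev x l' end.

Lemma ev_f x y m : ev (f x y) m = f x (ev y m).
Proof. revert x y; induction m as [|z m IH]; intros x y; simpl; auto.
  rewrite <- fA, IH; f_equal. Qed.

Lemma ev_app x l y m : ev x (l ++ y :: m) = f (ev x l) (ev y m).
Proof. revert x; induction l as [|z l IH]; intros x; simpl.
  - apply ev_f.
  - apply IH. Qed.

Lemma E_app d l1 l2 : l1 <> [] -> l2 <> [] -> E d (l1 ++ l2) = f (E d l1) (E d l2).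
Proof. destruct l1 as [|x l1]; [congruence|]. destruct l2 as [|y l2]; [congruence|].
  intros _ _. simpl. apply ev_app. Qed.

Lemma app_ne (l1 l2 : list T) : l1 <> [] -> l1 ++ l2 <> [].
Proof. destruct l1; simpl; congruence. Qed.

Lemma ctx d u v w1 w2 L1 L2 : L1 = u ++ w1 ++ v -> L2 = u ++ w2 ++ v ->
  w1 <> [] -> w2 <> [] -> E d w1 = E d w2 -> E d L1 = E d L2.
Proof. intros -> -> n1 n2 H.
  assert (K : forall w, w <> [] -> E d (w ++ v) = match v with [] => E d w | _ => f (E d w) (E d v) end).
  { intros w nw. destruct v as [|z v']. rewrite app_nil_r; auto. apply E_app; congruence. }
  assert (K2 : forall w, w <> [] -> E d (u ++ w ++ v) = match u with [] => E d (w ++ v) | _ => f (E d u) (E d (w ++ v)) end).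
  { intros w nw. destruct u as [|z u']. reflexivity. apply E_app. congruence. apply app_ne; auto. }
  rewrite (K2 w1 n1), (K2 w2 n2), (K w1 n1), (K w2 n2), H. reflexivity. Qed.

Lemma sq d w : w <> [] -> E d (w ++ w) = E d w.
Proof. intros n. rewrite E_app by auto. apply fI. Qed.
End Band.

Lemma b_trans (T : Type) (f : T -> T -> T) (fA : forall x y z, f x (f y z) = f (f x y) z) (fI : forall x, f x x = x) a b c (H0 : f (f a b) a = a) (H1 : f (f b c) b = b) : f (f a c) a = a.
Proof.
repeat rewrite fA.
change (E _ f a [a; c; a] = E _ f a [a]).
eapply eq_trans; [apply (ctx _ f fA a [] [c; a] [a] [a; b; a]); [reflexivity|reflexivity|discriminate|discriminate|simpl; first [assumption | symmetry; assumption]]|].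
eapply eq_trans; [apply (ctx _ f fA a [a] [a; c; a] [b] [b; c; b]); [reflexivity|reflexivity|discriminate|discriminate|simpl; first [assumption | symmetry; assumption]]|].
eapply eq_trans; [apply (ctx _ f fA a [] [b; a; c; a] [a; b; c] [a; b; c; a; b; c]); [reflexivity|reflexivity|discriminate|discriminate|symmetry; apply (sq _ f fA fI a [a; b; c]); discriminate]|].
eapply eq_trans; [apply (ctx _ f fA a [a; b; c; a] [a; c; a] [b; c; b] [b]); [reflexivity|reflexivity|discriminate|discriminate|simpl; first [assumption | symmetry; assumption]]|].
eapply eq_trans; [apply (ctx _ f fA a [a; b; c; a; b; a; c] [] [a] [a; b; a]); [reflexivity|reflexivity|discriminate|discriminate|simpl; first [assumption | symmetry; assumption]]|].
eapply eq_trans; [apply (ctx _ f fA a [a; b] [] [c; a; b; a; c; a; b; a] [c; a; b; a]); [reflexivity|reflexivity|discriminate|discriminate|apply (sq _ f fA fI a [c; a; b; a]); discriminate]|].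
eapply eq_trans; [apply (ctx _ f fA a [a; b; c; a] [a] [b] [b; c; b]); [reflexivity|reflexivity|discriminate|discriminate|simpl; first [assumption | symmetry; assumption]]|].
eapply eq_trans; [apply (ctx _ f fA a [] [b; a] [a; b; c; a; b; c] [a; b; c]); [reflexivity|reflexivity|discriminate|discriminate|apply (sq _ f fA fI a [a; b; c]); discriminate]|].
eapply eq_trans; [apply (ctx _ f fA a [a] [a] [b; c; b] [b]); [reflexivity|reflexivity|discriminate|discriminate|simpl; first [assumption | symmetry; assumption]]|].
eapply eq_trans; [apply (ctx _ f fA a [] [] [a; b; a] [a]); [reflexivity|reflexivity|discriminate|discriminate|simpl; first [assumption | symmetry; assumption]]|].
reflexivity.
Qed.

Lemma b_compR (T : Type) (f : T -> T -> T) (fA : forall x y z, f x (f y z) = f (f x y) z) (fI : forall x, f x x = x) a b u (H0 : f (f a b) a = a) (H1 : f (f b a) b = b) : f (f (f a u) (f b u)) (f a u) = f a u.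
Proof.
repeat rewrite fA.
change (E _ f a [a; u; b; u; a; u] = E _ f a [a; u]).
eapply eq_trans; [apply (ctx _ f fA a [a; u; b; u] [u] [a] [a; b; a]); [reflexivity|reflexivity|discriminate|discriminate|simpl; first [assumption | symmetry; assumption]]|].
eapply eq_trans; [apply (ctx _ f fA a [a; u; b; u; a] [] [b; a; u] [b; a; u; b; a; u]); [reflexivity|reflexivity|discriminate|discriminate|symmetry; apply (sq _ f fA fI a [b; a; u]); discriminate]|].
eapply eq_trans; [apply (ctx _ f fA a [a; u; b; u] [u; b; a; u] [a; b; a] [a]); [reflexivity|reflexivity|discriminate|discriminate|simpl; first [assumption | symmetry; assumption]]|].
eapply eq_trans; [apply (ctx _ f fA a [] [b; u; a; u; b; a; u] [a; u] [a; u; a; u]); [reflexivity|reflexivity|discriminate|discriminate|symmetry; apply (sq _ f fA fI a [a; u]); discriminate]|].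
eapply eq_trans; [apply (ctx _ f fA a [a] [a; u] [u; a; u; b; u; a; u; b] [u; a; u; b]); [reflexivity|reflexivity|discriminate|discriminate|apply (sq _ f fA fI a [u; a; u; b]); discriminate]|].
eapply eq_trans; [apply (ctx _ f fA a [] [b; a; u] [a; u; a; u] [a; u]); [reflexivity|reflexivity|discriminate|discriminate|apply (sq _ f fA fI a [a; u]); discriminate]|].
eapply eq_trans; [apply (ctx _ f fA a [] [u; b; a; u] [a] [a; b; a]); [reflexivity|reflexivity|discriminate|discriminate|simpl; first [assumption | symmetry; assumption]]|].
eapply eq_trans; [apply (ctx _ f fA a [a] [] [b; a; u; b; a; u] [b; a; u]); [reflexivity|reflexivity|discriminate|discriminate|apply (sq _ f fA fI a [b; a; u]); discriminate]|].
eapply eq_trans; [apply (ctx _ f fA a [] [u] [a; b; a] [a]); [reflexivity|reflexivity|discriminate|discriminate|simpl; first [assumption | symmetry; assumption]]|].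
reflexivity.
Qed.

Lemma b_compL (T : Type) (f : T -> T -> T) (fA : forall x y z, f x (f y z) = f (f x y) z) (fI : forall x, f x x = x) a b u (H0 : f (f a b) a = a) (H1 : f (f b a) b = b) : f (f (f u a) (f u b)) (f u a) = f u a.
Proof.
repeat rewrite fA.
change (E _ f u [u; a; u; b; u; a] = E _ f u [u; a]).
eapply eq_trans; [apply (ctx _ f fA u [u] [u; b; u; a] [a] [a; b; a]); [reflexivity|reflexivity|discriminate|discriminate|simpl; first [assumption | symmetry; assumption]]|].
eapply eq_trans; [apply (ctx _ f fA u [] [a; u; b; u; a] [u; a; b] [u; a; b; u; a; b]); [reflexivity|reflexivity|discriminate|discriminate|symmetry; apply (sq _ f fA fI u [u; a; b]); discriminate]|].
eapply eq_trans; [apply (ctx _ f fA u [u; a; b; u] [u; b; u; a] [a; b; a] [a]); [reflexivity|reflexivity|discriminate|discriminate|simpl; first [assumption | symmetry; assumption]]|].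
eapply eq_trans; [apply (ctx _ f fA u [u; a] [a; u; b; u; a] [b; u] [b; u; b; u]); [reflexivity|reflexivity|discriminate|discriminate|symmetry; apply (sq _ f fA fI u [b; u]); discriminate]|].
eapply eq_trans; [apply (ctx _ f fA u [u; a; b] [] [u; b; u; a; u; b; u; a] [u; b; u; a]); [reflexivity|reflexivity|discriminate|discriminate|apply (sq _ f fA fI u [u; b; u; a]); discriminate]|].
eapply eq_trans; [apply (ctx _ f fA u [u; a] [a] [b; u; b; u] [b; u]); [reflexivity|reflexivity|discriminate|discriminate|apply (sq _ f fA fI u [b; u]); discriminate]|].
eapply eq_trans; [apply (ctx _ f fA u [u; a; b; u] [] [a] [a; b; a]); [reflexivity|reflexivity|discriminate|discriminate|simpl; first [assumption | symmetry; assumption]]|].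
eapply eq_trans; [apply (ctx _ f fA u [] [a] [u; a; b; u; a; b] [u; a; b]); [reflexivity|reflexivity|discriminate|discriminate|apply (sq _ f fA fI u [u; a; b]); discriminate]|].
eapply eq_trans; [apply (ctx _ f fA u [u] [] [a; b; a] [a]); [reflexivity|reflexivity|discriminate|discriminate|simpl; first [assumption | symmetry; assumption]]|].
reflexivity.
Qed.

Lemma b_B1 (T : Type) (f : T -> T -> T) (fA : forall x y z, f x (f y z) = f (f x y) z) (fI : forall x, f x x = x) a u r (H0 : f (f a u) r = f a u) (H1 : f (f r a) u = f a u) (H2 : f a r = r) (H3 : f r u = r) : r = f a u.
Proof.
repeat rewrite fA.
change (E _ f r [r] = E _ f r [a; u]).
eapply eq_trans; [apply (ctx _ f fA r [] [] [r] [r; r]); [reflexivity|reflexivity|discriminate|discriminate|symmetry; apply (sq _ f fA fI r [r]); discriminate]|].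
eapply eq_trans; [apply (ctx _ f fA r [r] [] [r] [a; r]); [reflexivity|reflexivity|discriminate|discriminate|simpl; first [assumption | symmetry; assumption]]|].
eapply eq_trans; [apply (ctx _ f fA r [] [a; r] [r] [r; u]); [reflexivity|reflexivity|discriminate|discriminate|simpl; first [assumption | symmetry; assumption]]|].
eapply eq_trans; [apply (ctx _ f fA r [r] [r] [u; a] [u; a; u; a]); [reflexivity|reflexivity|discriminate|discriminate|symmetry; apply (sq _ f fA fI r [u; a]); discriminate]|].
eapply eq_trans; [apply (ctx _ f fA r [r; u; a; u] [] [a; r] [r]); [reflexivity|reflexivity|discriminate|discriminate|simpl; first [assumption | symmetry; assumption]]|].
eapply eq_trans; [apply (ctx _ f fA r [r; u] [] [a; u; r] [a; u]); [reflexivity|reflexivity|discriminate|discriminate|simpl; first [assumption | symmetry; assumption]]|].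
eapply eq_trans; [apply (ctx _ f fA r [] [a; u] [r; u] [r]); [reflexivity|reflexivity|discriminate|discriminate|simpl; first [assumption | symmetry; assumption]]|].
eapply eq_trans; [apply (ctx _ f fA r [] [] [r; a; u] [a; u]); [reflexivity|reflexivity|discriminate|discriminate|simpl; first [assumption | symmetry; assumption]]|].
reflexivity.
Qed.

Lemma b_comm (T : Type) (f : T -> T -> T) (fA : forall x y z, f x (f y z) = f (f x y) z) (fI : forall x, f x x = x) x y  : f (f (f x y) (f y x)) (f x y) = f x y.
Proof.
repeat rewrite fA.
change (E _ f x [x; y; y; x; x; y] = E _ f x [x; y]).
eapply eq_trans; [apply (ctx _ f fA x [x] [x; x; y] [y; y] [y]); [reflexivity|reflexivity|discriminate|discriminate|apply (sq _ f fA fI x [y]); discriminate]|].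
eapply eq_trans; [apply (ctx _ f fA x [x; y] [y] [x; x] [x]); [reflexivity|reflexivity|discriminate|discriminate|apply (sq _ f fA fI x [x]); discriminate]|].
eapply eq_trans; [apply (ctx _ f fA x [] [] [x; y; x; y] [x; y]); [reflexivity|reflexivity|discriminate|discriminate|apply (sq _ f fA fI x [x; y]); discriminate]|].
reflexivity.
Qed.

Lemma b_w1 (T : Type) (f : T -> T -> T) (fA : forall x y z, f x (f y z) = f (f x y) z) (fI : forall x, f x x = x) x u (H0 : f (f x u) x = x) : f (f x (f (f u x) u)) x = x.
Proof.
repeat rewrite fA.
change (E _ f x [x; u; x; u; x] = E _ f x [x]).
eapply eq_trans; [apply (ctx _ f fA x [] [x] [x; u; x; u] [x; u]); [reflexivity|reflexivity|discriminate|discriminate|apply (sq _ f fA fI x [x; u]); discriminate]|].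
eapply eq_trans; [apply (ctx _ f fA x [] [] [x; u; x] [x]); [reflexivity|reflexivity|discriminate|discriminate|simpl; first [assumption | symmetry; assumption]]|].
reflexivity.
Qed.

Lemma b_w2 (T : Type) (f : T -> T -> T) (fA : forall x y z, f x (f y z) = f (f x y) z) (fI : forall x, f x x = x) x u (H0 : f (f x u) x = x) : f (f (f (f u x) u) x) (f (f u x) u) = f (f u x) u.
Proof.
repeat rewrite fA.
change (E _ f u [u; x; u; x; u; x; u] = E _ f u [u; x; u]).
eapply eq_trans; [apply (ctx _ f fA u [] [u; x; u] [u; x; u; x] [u; x]); [reflexivity|reflexivity|discriminate|discriminate|apply (sq _ f fA fI u [u; x]); discriminate]|].
eapply eq_trans; [apply (ctx _ f fA u [] [u] [u; x; u; x] [u; x]); [reflexivity|reflexivity|discriminate|discriminate|apply (sq _ f fA fI u [u; x]); discriminate]|].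
reflexivity.
Qed.

Lemma b_xu (T : Type) (f : T -> T -> T) (fA : forall x y z, f x (f y z) = f (f x y) z) (fI : forall x, f x x = x) x y  : f (f x (f (f x y) x)) x = f (f x y) x.
Proof.
repeat rewrite fA.
change (E _ f x [x; x; y; x; x] = E _ f x [x; y; x]).
eapply eq_trans; [apply (ctx _ f fA x [] [y; x; x] [x; x] [x]); [reflexivity|reflexivity|discriminate|discriminate|apply (sq _ f fA fI x [x]); discriminate]|].
eapply eq_trans; [apply (ctx _ f fA x [x; y] [] [x; x] [x]); [reflexivity|reflexivity|discriminate|discriminate|apply (sq _ f fA fI x [x]); discriminate]|].
reflexivity.
Qed.

Lemma b_xxx (T : Type) (f : T -> T -> T) (fA : forall x y z, f x (f y z) = f (f x y) z) (fI : forall x, f x x = x) x  : f (f x x) x = x.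
Proof.
repeat rewrite fA.
change (E _ f x [x; x; x] = E _ f x [x]).
eapply eq_trans; [apply (ctx _ f fA x [] [x] [x; x] [x]); [reflexivity|reflexivity|discriminate|discriminate|apply (sq _ f fA fI x [x]); discriminate]|].
eapply eq_trans; [apply (ctx _ f fA x [] [] [x; x] [x]); [reflexivity|reflexivity|discriminate|discriminate|apply (sq _ f fA fI x [x]); discriminate]|].
reflexivity.
Qed.

Section Main.
Variables (S : Type) (add mul : S -> S -> S).
Hypothesis aA : forall x y z, add x (add y z) = add (add x y) z.
Hypothesis aI : forall x, add x x = x.
Hypothesis mA : forall x y z, mul x (mul y z) = mul (mul x y) z.
Hypothesis mI : forall x, mul x x = x.
Hypothesis dL : forall x y z, mul x (add y z) = add (mul x y) (mul x z).
Hypothesis dR : forall x y z, mul (add x y) z = add (mul x z) (mul y z).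

Definition P3 := forall x y, x = add (add (mul (mul x y) x) x) (mul (mul x y) x).
Definition P2 := (forall x y, add (add x (mul (mul x y) x)) x = x) /\
      (forall a b, Dadd add a b -> Dmul mul a b).

Lemma I12 : P3 -> forall x y, add x (mul (mul x y) x) = x /\ add (mul (mul x y) x) x = x.
Proof. intros H x y. pose proof (H x y) as Hx. remember (mul (mul x y) x) as u eqn:Hu.
  clear Hu. split.
  - transitivity (add (add (add u x) u) u). { f_equal; exact Hx. }
    rewrite <- (aA _ u u), aI. symmetry; exact Hx.
  - transitivity (add u (add (add u x) u)). { f_equal; exact Hx. }
    rewrite (aA u (add u x) u), (aA u u x), aI. symmetry; exact Hx.
Qed.

Lemma L32 : P3 -> P2.
Proof. intros H. split.
  - intros x y. rewrite (proj1 (I12 H x y)). apply aI.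
  - intros a b [H1 H2]. split.
    + rewrite <- H2. rewrite !dL, !dR, !mI. symmetry. apply H.
    + rewrite <- H1. rewrite !dL, !dR, !mI. symmetry. apply H.
Qed.

Lemma L23 : P2 -> P3.
Proof. intros [Ha Hb] x y. pose proof (b_xu _ mul mA mI x y) as Hxu.
  pose proof (Ha x y) as Hx.
  remember (mul (mul x y) x) as u eqn:Hu. try rewrite <- Hu in Hxu.
  assert (D : Dmul mul x (add (add u x) u)).
  { apply Hb. split. apply (b_w1 _ add aA aI x u Hx). apply (b_w2 _ add aA aI x u Hx). }
  destruct D as [D1 _]. rewrite !dL, !dR, Hxu, (b_xxx _ mul mA mI) in D1. symmetry. exact D1.
Qed.

Lemma L12 : least_dl_congruence add mul (Dmul mul) -> P2.
Proof. intros [[[Hrefl [Hsym [Htrans [Hadd Hmul]]]] [Hcomm [Hmcomm Habs]]] Hleast]. split.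
  - intros x y. pose proof (Habs x (mul y x)) as K. rewrite mA in K.
    pose proof (Hadd _ _ _ _ K (Hrefl x)) as K2. rewrite aI in K2.
    destruct K2 as [_ K2].
    transitivity (mul (mul x (add (add x (mul (mul x y) x)) x)) x); [| exact K2].
    rewrite !dL, !dR, (b_xxx _ mul mA mI), (b_xu _ mul mA mI). reflexivity.
  - intros a b [H1 H2].
    pose proof (Hadd _ _ _ _ (Hcomm a b) (Hrefl a)) as K1. rewrite H1, <- aA, aI in K1.
    pose proof (Hadd _ _ _ _ (Hcomm b a) (Hrefl b)) as K2. rewrite H2, <- aA, aI in K2.
    apply (Htrans _ _ _ K1). apply (Htrans _ _ _ (Hcomm b a)). apply Hsym, K2.
Qed.

Section P3s.
Hypothesis H3 : P3.
Let I1 x y : add x (mul (mul x y) x) = x := proj1 (I12 H3 x y).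
Let I2 x y : add (mul (mul x y) x) x = x := proj2 (I12 H3 x y).

Lemma addR1 a b u : mul (mul a b) a = a -> mul (mul (add a u) (add b u)) (add a u) = add a u.
Proof. intros Hab. remember (mul (mul (add a u) (add b u)) (add a u)) as r eqn:Er.
  apply (b_B1 _ add aA aI a u r).
  - rewrite Er. apply I1.
  - rewrite <- aA. rewrite Er. apply I2.
  - rewrite Er. rewrite !dL, !dR, Hab, !mI, !aA, aI. reflexivity.
  - rewrite Er. rewrite !dL, !dR, Hab, !mI, !aA. rewrite <- (aA _ u u), aI. reflexivity.
Qed.

Lemma addL1 a b u : mul (mul a b) a = a -> mul (mul (add u a) (add u b)) (add u a) = add u a.
Proof. intros Hab. remember (mul (mul (add u a) (add u b)) (add u a)) as r eqn:Er.
  apply (b_B1 _ add aA aI u a r).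
  - rewrite Er. apply I1.
  - rewrite <- aA. rewrite Er. apply I2.
  - rewrite Er. rewrite !dL, !dR, Hab, !mI, !aA, aI. reflexivity.
  - rewrite Er. rewrite !dL, !dR, Hab, !mI, !aA. rewrite <- (aA _ a a), aI. reflexivity.
Qed.

Lemma L31 : least_dl_congruence add mul (Dmul mul).
Proof.
  assert (Tr : forall x y z, Dmul mul x y -> Dmul mul y z -> Dmul mul x z).
  { intros x y z [A1 A2] [B1 B2]. split.
    apply (b_trans _ mul mA mI x y z A1 B1). apply (b_trans _ mul mA mI z y x B2 A2). }
  split; [split; [split; [|split; [|split; [|split]]] | split; [|split]] |].
  - intros x. split; apply (b_xxx _ mul mA mI).
  - intros x y [A1 A2]; split; assumption.
  - exact Tr.
  - intros x y u v [A1 A2] [B1 B2]. apply Tr with (add y u).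
    + split; apply addR1; assumption.
    + split; apply addL1; assumption.
  - intros x y u v [A1 A2] [B1 B2]. apply Tr with (mul y u).
    + split. apply (b_compR _ mul mA mI x y u A1 A2). apply (b_compR _ mul mA mI y x u A2 A1).
    + split. apply (b_compL _ mul mA mI u v y B1 B2). apply (b_compL _ mul mA mI v u y B2 B1).
  - intros x y. apply (proj2 (L32 H3)). split; apply (b_comm _ add aA aI).
  - intros x y. split; apply (b_comm _ mul mA mI).
  - intros x y. split.
    + rewrite dR, mI, I1, dL, mI, mA, mI. reflexivity.
    + rewrite dL, mI, mA, mI, dR, mI, I1. reflexivity.
  - intros sigma [[Sr [Ss [St [Sa Sm]]]] [Sc [Smc Sab]]] a b [H1 H2].
    pose proof (Smc (mul a b) a) as K1. rewrite H1, mA, mI in K1.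
    pose proof (Smc (mul b a) b) as K2. rewrite H2, mA, mI in K2.
    apply (St _ _ _ K1). apply (St _ _ _ (Smc a b)). apply Ss, K2.
Qed.
End P3s.
End Main.

Theorem theorem3p1 (S : Type) (add mul : S -> S -> S)
  (HS : idempotent_semiring add mul) :
  (least_dl_congruence add mul (Dmul mul) <->
     ((forall x y, add (add x (mul (mul x y) x)) x = x) /\
      (forall a b, Dadd add a b -> Dmul mul a b))) /\
  (((forall x y, add (add x (mul (mul x y) x)) x = x) /\
    (forall a b, Dadd add a b -> Dmul mul a b)) <->
     (forall x y, x = add (add (mul (mul x y) x) x) (mul (mul x y) x))).
Proof.
  destruct HS as (aA & aI & mA & mI & dL & dR).
  split; split; intro H.
  - exact (L12 S add mul aA aI mA mI dL dR H).
  - exact (L31 S add mul aA aI mA mI dL dR (L23 S add mul aA aI mA mI dL dR H)).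
  - exact (L23 S add mul aA aI mA mI dL dR H).
  - exact (L32 S add mul aA aI mI dL dR H).
Qed.
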